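(* Assume $\mathrm{char}(\mathcal{O}/\mathfrak{p})\neq 2$, and let $k,n\ge1$. Let $G$ be a group with $\mathrm{Hei}_{2k+1}(\mathcal{O}/\mathfrak{p}^n)\subseteq G\subseteq \mathbf{U}_{k+2}(\mathcal{O}/\mathfrak{p}^n)$. Then $m_{\mathsf{faithful}}(G)=m_{\mathsf{faithful}}\big(\mathrm{Hei}_{2k+1}(\mathcal{O}/\mathfrak{p}^n)\big)$.
   Context: For a finite group $G$, $m_{\mathsf{faithful}}(G)$ denotes the smallest dimension of a faithful complex representation of $G$. $F$ is a non-Archimedean local field with ring of integers $\mathcal{O}$ and maximal ideal $\mathfrak{p}$. For a commutative unital ring $R$, $\mathbf{U}_{m}(R)\subseteq \mathrm{GL}_m(R)$ is the group of upper unitriangular $m\times m$ matrices, and the Heisenberg group $\mathrm{Hei}_{2k+1}(R)$ is the subgroup of $\mathbf{U}_{k+2}(R)$ consisting of the matrices $\begin{pmatrix}1&\mathbf{x}&z\\0&I_k&\mathbf{y}^T\\0&0&1\end{pmatrix}$ with $\mathbf{x},\mathbf{y}\in R^k$, $z\in R$. *)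

(* Defs.v *)
From HB Require Import structures.
From mathcomp Require Import all_boot all_order all_algebra all_fingroup all_solvable all_field all_character.
From Stdlib Require Import ClassicalEpsilon.
Set Implicit Arguments. Unset Strict Implicit. Unset Printing Implicit Defensive.
Import GRing.Theory Num.Theory.
Local Open Scope ring_scope.

(* Finite chain rings = the rings O/p^n (n >= 1) for O the ring of integers of
   a non-Archimedean local field: a finite commutative (nonzero) ring R with a
   non-unit pi such that every non-unit of R is a multiple of pi
   (i.e. R is local with principal maximal ideal pi R; pi is then nilpotent). *)
Definition chain_ring_unif (R : finComUnitRingType) (pi : R) : Prop :=
  pi \isn't a GRing.unit /\
  forall x : R, x \isn't a GRing.unit -> exists y : R, x = pi * y.

Definition Umat (R : finComUnitRingType) (m : nat) : {set {'GL_m.+1[R]}} :=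
  [set g : {'GL_m.+1[R]} | [forall i : 'I_m.+1, forall j : 'I_m.+1,
      ((j < i)%N ==> (GLval g i j == 0)) && ((i == j) ==> (GLval g i j == 1))]].

(* Hei_{2k+1}(R) inside U_{k+2}(R): unitriangular matrices whose only
   off-diagonal nonzero entries lie in the first row or the last column. *)
Definition Hei (R : finComUnitRingType) (k : nat) : {set {'GL_k.+2[R]}} :=
  [set g in Umat R k.+1 | [forall i : 'I_k.+2, forall j : 'I_k.+2,
      [&& (i < j)%N, (0 < i)%N & (j < k.+1)%N] ==> (GLval g i j == 0)]].

Definition has_faithful_rep (gT : finGroupType) (G : {group gT}) (n : nat) : Prop :=
  exists rG : mx_representation algC G n, mx_faithful rG.

Definition has_faithful_repb (gT : finGroupType) (G : {group gT}) (n : nat) : bool :=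
  if excluded_middle_informative (has_faithful_rep G n) then true else false.

Lemma has_faithful_repb_ex (gT : finGroupType) (G : {group gT}) :
  exists n, has_faithful_repb G n.
Proof.
exists #|G|; rewrite /has_faithful_repb.
case: excluded_middle_informative => // [[]].
by exists (regular_repr algC G); exact: regular_mx_faithful.
Qed.

Definition m_faithful (gT : finGroupType) (G : {group gT}) : nat :=
  ex_minn (has_faithful_repb_ex G).

(* Main.v *)
Require Import Defs.
From HB Require Import structures.
From mathcomp Require Import all_boot all_order all_algebra all_fingroup all_solvable all_field all_character.
From mathcomp Require Import zify.
From Stdlib Require Import ClassicalEpsilon.
Set Implicit Arguments. Unset Strict Implicit. Unset Printing Implicit Defensive.
Import Order.TTheory GRing.Theory Num.Theory.
Local Open Scope ring_scope.

Lemma unit1N (T : unitRingType) (N : T) : N * N = 0 -> 1 + N \is a GRing.unit.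
Proof.
move=> NN; apply/unitrP; exists (1 - N); split.
  by rewrite mulrDr !mulrBl !mulr1 !mul1r NN subr0 addrNK.
by rewrite mulrBr !mulrDl !mulr1 !mul1r NN addr0 addrK.
Qed.

Lemma cfker_sum_char (gT : finGroupType) (G : {group gT}) (I : finType) (P : pred I)
  (Phi : I -> 'CF(G)) x :
  (forall i, P i -> Phi i \is a character) ->
  x \in cfker (\sum_(i | P i) Phi i) -> forall i, P i -> x \in cfker (Phi i).
Proof.
move=> Nc Kx i Pi.
have Nsum : (\sum_(i | P i) Phi i) \is a character by apply: rpred_sum.
move: Kx; rewrite !cfkerEchar ?Nc // !inE => /andP[Gx /eqP]; rewrite !sum_cfunE => Heq.
rewrite Gx /=; apply/eqP; apply: (normC_sum_upper _ Heq) => // j Pj.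
exact: char1_ge_norm (Nc j Pj).
Qed.

Section Mat.
Variables (R : finComUnitRingType) (k : nat).
Local Notation n := k.+2.
Local Notation gT := {'GL_n[R]}.

Definition i0 : 'I_n := ord0.
Definition il : 'I_n := ord_max.
Definition ecol (i : 'I_n) : 'cV[R]_n := delta_mx i 0.
Definition erow (j : 'I_n) : 'rV[R]_n := delta_mx 0 j.
Definition mkT (N : 'M[R]_n) : gT := insubd (1%g : gT) (1 + N).

Lemma mkTE N : N *m N = 0 -> GLval (mkT N) = 1 + N.
Proof.
move=> NN; rewrite /mkT insubdK //; apply: unit1N; by rewrite -mulmxE.
Qed.

Local Notation e0 := (ecol i0).
Local Notation el := (erow il).
Definition E (v : 'cV[R]_n) : gT := mkT (v *m el).
Definition F (a : 'rV[R]_n) : gT := mkT (e0 *m a).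
Definition Zc (s : R) : gT := E (s *: e0).

Lemma GLinj : injective (@GLval n R).
Proof. exact: val_inj. Qed.

Lemma il_neq0 : il != i0.
Proof. by rewrite -val_eqE. Qed.

Lemma ele0 : el *m e0 = 0.
Proof. by rewrite /erow /ecol mul_delta_mx_cond (negbTE il_neq0) mulr0n. Qed.

Lemma elv (v : 'cV[R]_n) : v il 0 = 0 -> el *m v = 0.
Proof.
move=> v0; rewrite /erow -rowE; apply/matrixP=> i j.
by rewrite (ord1 i) (ord1 j) !mxE v0.
Qed.

Lemma ae0 (a : 'rV[R]_n) : a 0 i0 = 0 -> a *m e0 = 0.
Proof.
move=> a0; rewrite /ecol -colE; apply/matrixP=> i j.
by rewrite (ord1 i) (ord1 j) !mxE a0.
Qed.

Lemma EE (v : 'cV[R]_n) : v il 0 = 0 -> GLval (E v) = 1 + v *m el.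
Proof. by move=> v0; rewrite mkTE // mulmxA -(mulmxA v) elv // mulmx0 mul0mx. Qed.

Lemma FE (a : 'rV[R]_n) : a 0 i0 = 0 -> GLval (F a) = 1 + e0 *m a.
Proof. by move=> a0; rewrite mkTE // mulmxA -(mulmxA e0) ae0 // mulmx0 mul0mx. Qed.

Lemma Zc0 s : (s *: e0) il 0 = 0.
Proof. by rewrite !mxE (negbTE il_neq0) mulr0. Qed.

Lemma ZcE s : GLval (Zc s) = 1 + s *: (e0 *m el).
Proof. by rewrite EE ?Zc0 // scalemxAl. Qed.

Lemma EM (v w : 'cV[R]_n) : v il 0 = 0 -> w il 0 = 0 -> (E v * E w)%g = E (v + w).
Proof.
move=> v0 w0; apply: GLinj.
have vw0 : (v + w) il 0 = 0 by rewrite mxE v0 w0 addr0.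
rewrite GL_MxE !EE // mulmxDr mulmx1 mulmxDl mul1mx mulmxA -(mulmxA v) elv //.
by rewrite mulmx0 mul0mx addr0 mulmxDl addrA.
Qed.


Local Notation U := (Umat R k.+1).

Lemma Uent g : g \in U ->
  (forall i j : 'I_n, (j < i)%N -> GLval g i j = 0) /\ (forall i, GLval g i i = 1).
Proof.
rewrite inE => /forallP Hg; split=> [i j lt_ji | i].
  by have /forallP/(_ j)/andP[/implyP/(_ lt_ji)/eqP] := Hg i.
by have /forallP/(_ i)/andP[_ /implyP/(_ (eqxx i))/eqP] := Hg i.
Qed.

Lemma elE (X : 'M[R]_(n, 1)) j : (el *m X) 0 j = X il j.
Proof. by rewrite /erow -rowE mxE. Qed.

Lemma Urow g : g \in U -> el *m GLval g = el.
Proof.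
case/Uent=> Hl Hd; rewrite /erow -rowE; apply/rowP=> j; rewrite !mxE eqxx /=.
have [->|ne] := eqVneq j il; first by rewrite Hd.
rewrite Hl //; have := ltn_ord j; rewrite ltnS leq_eqVlt => /orP[|//].
by move=> /eqP eq; case/eqP: ne; apply: val_inj.
Qed.

Lemma Ucol g : g \in U -> GLval g *m e0 = e0.
Proof.
case/Uent=> Hl Hd; rewrite /ecol -colE; apply/colP=> i; rewrite !mxE eqxx andbT.
have [->|ne] := eqVneq i i0; first by rewrite Hd.
by rewrite Hl // lt0n.
Qed.

Lemma Uv g (v : 'cV[R]_n) : g \in U -> v il 0 = 0 -> (GLval g *m v) il 0 = 0.
Proof. by move=> Ug v0; rewrite -elE mulmxA Urow // elE. Qed.

Lemma conjE g (v : 'cV[R]_n) : g \in U -> v il 0 = 0 ->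
  (g * E v = E (GLval g *m v) * g)%g.
Proof.
move=> Ug v0; apply: GLinj; rewrite !GL_MxE !EE ?Uv //.
rewrite mulmxDr mulmx1 mulmxDl mul1mx -(mulmxA _ el) Urow //.
by rewrite mulmxA.
Qed.

Lemma commFE (a : 'rV[R]_n) (v : 'cV[R]_n) : a 0 i0 = 0 -> v il 0 = 0 ->
  (F a * E v = Zc ((a *m v) 0 0) * (E v * F a))%g.
Proof.
move=> a0 v0; apply: GLinj; rewrite !GL_MxE ZcE !EE // !FE //.
set s := (a *m v) 0 0.
have h1 : (1 + v *m el) *m (1 + e0 *m a) = 1 + e0 *m a + v *m el.
  rewrite mulmxDr mulmx1 mulmxDl mul1mx -(mulmxA v) (mulmxA el) ele0.
  by rewrite mul0mx mulmx0 addr0 addrAC.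
have h2 : el *m (1 + e0 *m a + v *m el) = el.
  by rewrite !mulmxDr mulmx1 !mulmxA ele0 elv // !mul0mx !addr0.
have h3 : a *m v = s%:M by rewrite [a *m v]mx11_scalar.
have L : (1 + e0 *m a) *m (1 + v *m el) = 1 + e0 *m a + v *m el + s *: (e0 *m el).
  rewrite mulmxDr mulmx1 mulmxDl mul1mx -mulmxA (mulmxA a v) h3 mul_scalar_mx.
  by rewrite -scalemxAr addrA.
rewrite L h1 mulmxDl mul1mx -scalemxAl -mulmxA h2.
by [].
Qed.


Lemma Eent (v : 'cV[R]_n) i j :
  ((1 + v *m el) : 'M[R]_n) i j = (i == j)%:R + v i 0 * (j == il)%:R.
Proof. by rewrite !mxE big_ord1 !mxE. Qed.

Lemma Fent (a : 'rV[R]_n) i j :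
  ((1 + e0 *m a) : 'M[R]_n) i j = (i == j)%:R + (i == i0)%:R * a 0 j.
Proof. by rewrite !mxE big_ord1 !mxE andbT. Qed.

Lemma E_H (v : 'cV[R]_n) : v il 0 = 0 -> E v \in Hei R k.
Proof.
move=> v0; rewrite !inE; apply/andP; split; apply/forallP=> i; apply/forallP=> j;
  rewrite EE // Eent.
  apply/andP; split; apply/implyP=> h.
    have -> : (i == j) = false by apply/eqP=> ij; rewrite ij ltnn in h.
    have -> : (j == il) = false.
      by apply/negbTE; rewrite -val_eqE /=; have := ltn_ord i; lia.
    by rewrite mulr0 addr0.
  rewrite h; move/eqP: h => <-; have [->|_] := eqVneq i il; first by rewrite v0 mul0r addr0.
  by rewrite mulr0 addr0.
apply/implyP=> /and3P[h1 h2 h3].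
have -> : (i == j) = false by apply/negbTE; rewrite -val_eqE /=; lia.
have -> : (j == il) = false by apply/negbTE; rewrite -val_eqE /=; lia.
by rewrite mulr0 addr0.
Qed.

Lemma F_H (a : 'rV[R]_n) : a 0 i0 = 0 -> F a \in Hei R k.
Proof.
move=> a0; rewrite !inE; apply/andP; split; apply/forallP=> i; apply/forallP=> j;
  rewrite FE // Fent.
  apply/andP; split; apply/implyP=> h.
    have -> : (i == j) = false by apply/eqP=> ij; rewrite ij ltnn in h.
    have -> : (i == i0) = false.
      by apply/negbTE; rewrite -val_eqE /=; lia.
    by rewrite mul0r addr0.
  rewrite h; move/eqP: h => <-; have [->|_] := eqVneq i i0; first by rewrite a0 mulr0 addr0.
  by rewrite mul0r addr0.
apply/implyP=> /and3P[h1 h2 h3].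
have -> : (i == j) = false by apply/negbTE; rewrite -val_eqE /=; lia.
have -> : (i == i0) = false by apply/negbTE; rewrite -val_eqE /=; lia.
by rewrite mul0r addr0.
Qed.


Lemma E0 : E 0 = 1%g.
Proof. by apply: GLinj; rewrite EE ?mxE // mul0mx addr0. Qed.

Lemma EV (v : 'cV[R]_n) : v il 0 = 0 -> E (- v) = (E v)^-1%g.
Proof.
move=> v0; apply/eqP; rewrite eq_sym eq_invg_mul EM ?mxE ?v0 ?oppr0 //.
by rewrite subrr E0.
Qed.

Lemma colEnt p (X : 'M[R]_(p, n)) i j : (X *m ecol j) i 0 = X i j.
Proof. by rewrite /ecol -colE mxE. Qed.

Lemma rowEnt p (X : 'M[R]_(n, p)) i j : (erow i *m X) 0 j = X i j.
Proof. by rewrite /erow -rowE mxE. Qed.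

Lemma Ecol (g : gT) : g \in U -> (forall j, j != il -> GLval g *m ecol j = ecol j) ->
  g = E (GLval g *m ecol il - ecol il).
Proof.
move=> Ug Hc; apply: GLinj.
have c0 : (GLval g *m ecol il - ecol il) il 0 = 0.
  by rewrite mxE colEnt (Uent Ug).2 !mxE !eqxx subrr.
rewrite EE //; apply/matrixP=> i j; rewrite Eent mxE colEnt !mxE eqxx andbT.
have [->|ne] := eqVneq j il; first by rewrite mulr1 addrCA subrr addr0.
by rewrite /= mulr0 addr0 -colEnt Hc // mxE andbT.
Qed.

Variables (G H : {group gT}).
Hypotheses (hH : H :=: Hei R k) (hHG : H \subset G) (hGU : G \subset U).

Lemma E_G (v : 'cV[R]_n) : v il 0 = 0 -> E v \in G.
Proof. by move=> v0; apply: (subsetP hHG); rewrite hH E_H. Qed.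

Lemma F_G (a : 'rV[R]_n) : a 0 i0 = 0 -> F a \in G.
Proof. by move=> a0; apply: (subsetP hHG); rewrite hH F_H. Qed.

Section Kern.
Variable K : {group gT}.
Hypotheses (nKG : (K <| G)%g) (hZ : forall s, Zc s \in K -> s = 0).

Lemma normK x y : x \in G -> y \in K -> (x * y * x^-1)%g \in K.
Proof.
move=> Gx Ky; have [_ /subsetP nK] := andP nKG.
have : (y ^ x^-1)%g \in K by rewrite memJ_norm // groupV nK.
by rewrite conjgE invgK mulgA.
Qed.

Lemma KE (v : 'cV[R]_n) : v il 0 = 0 -> E v \in K -> v = 0.
Proof.
move=> v0 Kv.
have mid : forall j : 'I_n, j != i0 -> v j 0 = 0.
  move=> j nj; have a0 : erow j 0 i0 = 0 by rewrite mxE eq_sym (negbTE nj) andbF.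
  have h := commFE a0 v0.
  have -> : v j 0 = (erow j *m v) 0 0 by rewrite rowEnt.
  apply: hZ; have -> : Zc ((erow j *m v) 0 0) = (F (erow j) * E v * (E v * F (erow j))^-1)%g.
    by rewrite h mulgK.
  by rewrite invMg mulgA groupM ?groupV // normK // F_G.
have vE : v = (v i0 0) *: e0.
  apply/matrixP=> i j; rewrite (ord1 j) !mxE andbT.
  have [->|ni] := eqVneq i i0; first by rewrite mulr1.
  by rewrite mulr0 mid.
move: Kv; rewrite vE => /hZ ->; by rewrite scale0r.
Qed.

Lemma Ktriv : (K \subset [1 gT])%g.
Proof.
apply/subsetP=> g Kg; rewrite inE; apply/eqP.
have Gg : g \in G by apply: (subsetP (normal_sub nKG)).
have Ug : g \in U by apply: (subsetP hGU).
have Hc : forall j, j != il -> GLval g *m ecol j = ecol j.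
  move=> j nj; have u0 : ecol j il 0 = 0 by rewrite mxE andbT eq_sym (negbTE nj).
  apply/eqP; rewrite -subr_eq0; apply/eqP; apply: KE.
    by rewrite mxE Uv // mxE u0 oppr0 addr0.
  have -> : E (GLval g *m ecol j - ecol j) = (E (GLval g *m ecol j) * E (- ecol j))%g.
    by rewrite EM ?Uv // mxE u0 oppr0.
  rewrite EV //.
  have h := conjE Ug u0.
  have -> : E (GLval g *m ecol j) = (g * E (ecol j) * g^-1)%g by rewrite h mulgK.
  by rewrite -!mulgA groupM // mulgA normK ?groupV // E_G.
rewrite (Ecol Ug Hc); have -> : GLval g *m ecol il - ecol il = 0.
  apply: KE; first by rewrite mxE colEnt (Uent Ug).2 !mxE !eqxx subrr.
  by rewrite -(Ecol Ug Hc).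
by rewrite E0.
Qed.

End Kern.


Lemma H_U : H \subset U.
Proof. exact: subset_trans hHG hGU. Qed.

Definition Bset : {set gT} :=
  [set g in H | [forall j : 'I_n, (j != il) ==> (GLval g *m ecol j == ecol j)]].

Lemma Bgroup_set : group_set Bset.
Proof.
apply/group_setP; split.
  rewrite inE group1; apply/forallP=> j; apply/implyP=> _.
  by rewrite GL_1E mul1mx.
move=> x y /setIdP[Hx /forallP Cx] /setIdP[Hy /forallP Cy].
rewrite inE groupM //; apply/forallP=> j; apply/implyP=> nj.
rewrite GL_MxE -mulmxA (eqP (implyP (Cy j) nj)).
exact: (implyP (Cx j) nj).
Qed.

Canonical Bgroup := Group Bgroup_set.
Local Notation B := Bgroup.

Lemma el_ecol j : j != il -> el *m ecol j = 0.
Proof.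
move=> nj; apply/matrixP=> a b; rewrite (ord1 a) (ord1 b) rowEnt mxE andbT.
by rewrite mxE eq_sym (negbTE nj).
Qed.

Lemma E_B (v : 'cV[R]_n) : v il 0 = 0 -> E v \in B.
Proof.
move=> v0; rewrite inE hH E_H //; apply/forallP=> j; apply/implyP=> nj.
by rewrite EE // mulmxDl mul1mx -mulmxA el_ecol // mulmx0 addr0.
Qed.

Lemma memB g : g \in B -> exists2 v : 'cV[R]_n, v il 0 = 0 & g = E v.
Proof.
case/setIdP=> Hg /forallP Cg.
have Ug : g \in U by apply: (subsetP H_U).
exists (GLval g *m ecol il - ecol il).
  by rewrite mxE colEnt (Uent Ug).2 !mxE !eqxx subrr.
by apply: Ecol => // j nj; apply/eqP; exact: (implyP (Cg j) nj).
Qed.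

Lemma B_H : B \subset H.
Proof. by apply/subsetP=> g /setIdP[]. Qed.

Lemma B_abelian : abelian B.
Proof.
apply/centsP=> x /memB[v v0 ->] y /memB[w w0 ->].
by rewrite /commute !EM // addrC.
Qed.

Lemma B_normal : (B <| H)%g.
Proof.
rewrite /normal B_H /=; apply/subsetP=> h Hh; rewrite inE.
apply/subsetP=> y /imsetP[b /memB[v v0 ->] ->].
have Uh : h^-1%g \in U by apply: (subsetP H_U); rewrite groupV.
have := conjE Uh v0; rewrite conjgE mulgA => ->.
by rewrite -mulgA mulVg mulg1 E_B // Uv.
Qed.

Lemma Zc_B s : Zc s \in B.
Proof. exact: E_B (Zc0 s). Qed.

Lemma ZcM s t : (Zc s * Zc t)%g = Zc (s + t).
Proof. by rewrite /Zc EM ?Zc0 // scalerDl. Qed.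

Lemma Zc_0 : Zc 0 = 1%g.
Proof. by rewrite /Zc scale0r E0. Qed.

Lemma Zc_ent s : GLval (Zc s) i0 il = s.
Proof.

by rewrite ZcE !mxE big_ord1 !mxE eq_sym (negbTE il_neq0) !eqxx /= !mulr1 add0r.
Qed.

Lemma Zc_central g s : g \in U -> (g * Zc s = Zc s * g)%g.
Proof.
move=> Ug; rewrite /Zc conjE ?Zc0 //.
by rewrite -scalemxAr Ucol.
Qed.


Lemma ord_cases (l : 'I_n) : [\/ l = i0, l = il | (0 < l)%N && (l < k.+1)%N].
Proof.
have := ltn_ord l; case: l => [[|m] lm] /=.
  by move=> _; constructor 1; apply: val_inj.
rewrite ltnS leq_eqVlt => /orP[/eqP em|lt].
  by constructor 2; apply: val_inj => /=; rewrite em.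
by constructor 3.
Qed.

Lemma GLMent (x y : gT) i j :
  GLval (x * y)%g i j = \sum_l GLval x i l * GLval y l j.
Proof. by rewrite GL_MxE mxE. Qed.

Lemma chi_lin (b : Iirr B) : 'chi[B]_b \is a linear_char.
Proof. by move/char_abelianP: B_abelian. Qed.

Definition psi (b : Iirr B) (s : R) : algC := 'chi[B]_b (Zc s).

Lemma psiD b s t : psi b (s + t) = psi b s * psi b t.
Proof. by rewrite /psi -ZcM lin_charM ?Zc_B ?chi_lin. Qed.

Lemma psi0 b : psi b 0 = 1.
Proof. by rewrite /psi Zc_0 lin_char1 ?chi_lin. Qed.

Lemma psi_sum b (I : finType) (P : pred I) (f : I -> R) :
  psi b (\sum_(i | P i) f i) = \prod_(i | P i) psi b (f i).
Proof. exact: (big_morph _ (psiD b) (psi0 b)). Qed.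

Definition Cset (b : Iirr B) : {set gT} :=
  [set g in G | [forall j : 'I_n, ((0 < j)%N && (j < k.+1)%N) ==>
     [forall r : R, psi b (GLval g i0 j * r) == 1]]].

Lemma CsetP b g : g \in Cset b -> g \in G /\
  forall (j : 'I_n) r, (0 < j)%N -> (j < k.+1)%N -> psi b (GLval g i0 j * r) = 1.
Proof.
case/setIdP=> Gg /forallP Cg; split=> // j r j0 jk.
by have /implyP/(_ (introT andP (conj j0 jk)))/forallP/(_ r)/eqP := Cg j.
Qed.

Lemma lt_il (j : 'I_n) : (j < k.+1)%N -> j != il.
Proof. by move=> jk; rewrite -val_eqE /= neq_ltn jk. Qed.

Lemma Cgroup_set b : group_set (Cset b).
Proof.
apply/group_setP; split.
  rewrite inE group1; apply/forallP=> j; apply/implyP=> /andP[j0 _].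
  apply/forallP=> r; rewrite GL_1E mxE.
  have -> : (i0 == j) = false by apply/negbTE; rewrite -val_eqE /=; lia.
  by rewrite mul0r psi0.
move=> x y /CsetP[Gx Cx] /CsetP[Gy Cy].
have Ux : x \in U by apply: (subsetP hGU).
have Uy : y \in U by apply: (subsetP hGU).
rewrite inE groupM //; apply/forallP=> j; apply/implyP=> /andP[j0 jk].
apply/forallP=> r; rewrite GLMent mulr_suml psi_sum; apply/eqP; apply: big1=> l _.
case: (ord_cases l) => [->|->|/andP[l0 lk]].
- by rewrite (Uent Ux).2 mul1r Cy.
- by rewrite (Uent Uy).1 ?mulr0 ?mul0r ?psi0 // (ltn_trans jk).
- by rewrite -mulrA Cx.
Qed.

Canonical Cgroup b := Group (Cgroup_set b).

Lemma C_G b : Cgroup b \subset G.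
Proof. by apply/subsetP=> g /setIdP[]. Qed.

Definition rlam (b : Iirr B) (g : gT) : 'M[algC]_1 := (psi b (GLval g i0 il))%:M.

Lemma rlam_repr b : mx_repr (Cgroup b) (rlam b).
Proof.
split.
  by rewrite /rlam GL_1E mxE eq_sym (negbTE il_neq0) psi0.
move=> x y /CsetP[Gx Cx] /CsetP[Gy Cy].
have Ux : x \in U by apply: (subsetP hGU).
have Uy : y \in U by apply: (subsetP hGU).
rewrite /rlam -scalar_mxM; congr (_%:M).
rewrite GLMent psi_sum (bigD1 i0) // (bigD1 il) //=.
rewrite big1 => [|l /andP[nl0 nl]]; last first.
  case: (ord_cases l) => [el0|el1|/andP[l0 lk]].
  - by rewrite el0 eqxx in nl0.
  - by rewrite el1 eqxx in nl.
  - by rewrite Cx.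
by rewrite (Uent Ux).2 (Uent Uy).2 mul1r mulr1 mulr1 mulrC.
Qed.

Definition Crep b := MxRepresentation (rlam_repr b).
Definition lam b : 'CF(Cgroup b) := cfRepr (Crep b).

Lemma lam_val b c : c \in Cgroup b -> lam b c = psi b (GLval c i0 il).
Proof. by move=> Cc; rewrite cfunE Cc mulr1n /= mxtrace_scalar. Qed.

Lemma lam_char b : lam b \is a character.
Proof. exact: cfRepr_char. Qed.

Lemma lam1 b : lam b 1%g = 1.
Proof. exact: cfRepr1. Qed.


Lemma HeiEnt (h : gT) (i j : 'I_n) : h \in H -> (0 < i)%N -> (i < j)%N -> (j < k.+1)%N ->
  GLval h i j = 0.
Proof.
rewrite hH inE => /andP[_ /forallP Hh] i0' ij jk.
have /forallP/(_ j)/implyP := Hh i; move/(_ (introT and3P (And3 ij i0' jk))).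
by move/eqP.
Qed.

Lemma colH (h : gT) (j : 'I_n) : h \in H -> (0 < j)%N -> (j < k.+1)%N ->
  GLval h *m ecol j = ecol j + GLval h i0 j *: e0.
Proof.
move=> Hh j0 jk; have Uh : h \in U by apply: (subsetP H_U).
apply/matrixP=> i c; rewrite (ord1 c) colEnt !mxE !andbT.
case: (ord_cases i) => [->|->|/andP[i0' ik]].
- have -> : (i0 == j) = false by apply/negbTE; rewrite -val_eqE /=; lia.
  by rewrite eqxx mulr1 add0r.
- rewrite ((Uent Uh).1 il j); last exact: jk.
  have -> : (il == j) = false by apply/negbTE; rewrite -val_eqE /=; lia.
  by rewrite ?(negbTE il_neq0) /= ?mulr0 ?addr0.
have -> : (i == i0) = false by apply/negbTE; rewrite -val_eqE /=; lia.
rewrite mulr0 addr0; have [->|nij] := eqVneq i j; first by rewrite (Uent Uh).2.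
have [lt|lt] := ltnP i j.
  by rewrite HeiEnt.
rewrite (Uent Uh).1 //; rewrite leq_eqVlt in lt; case/orP: lt => // /eqP e.
by case/eqP: nij; apply: val_inj.
Qed.

Lemma inertiaC b h : h \in H -> ('chi[B]_b ^ h)%CF = 'chi_b -> h \in Cset b.
Proof.
move=> Hh Ih; have Uh : h \in U by apply: (subsetP H_U).
rewrite inE (subsetP hHG) //=; apply/forallP=> j; apply/implyP=> /andP[j0 jk].
apply/forallP=> r; apply/eqP.
set v := r *: ecol j.
have v0 : v il 0 = 0 by rewrite !mxE eq_sym (negbTE (lt_il jk)) mulr0.
have nBh : h \in 'N(B)%g by apply: (subsetP (normal_norm B_normal)).
have e1 : ('chi[B]_b ^ h)%CF (E v) = 'chi_b (E v ^ h^-1)%g := cfConjgE _ _ nBh.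
rewrite Ih conjgE invgK mulgA (conjE Uh v0) mulgK in e1.
have hv : GLval h *m v = v + (GLval h i0 j * r) *: e0.
  by rewrite /v -scalemxAr colH // scalerDr scalerA mulrC.
rewrite hv in e1.
have w0 : ((GLval h i0 j * r) *: e0) il 0 = 0 by apply: Zc0.
move: e1; rewrite -EM // -/(Zc _) lin_charM ?chi_lin ?E_B ?Zc_B //.
move=> e1; apply: (mulfI (lin_char_neq0 (chi_lin b) (E_B v0))).
by rewrite mulr1 -e1.
Qed.

Lemma FM (a c : 'rV[R]_n) : a 0 i0 = 0 -> c 0 i0 = 0 -> (F a * F c)%g = F (a + c).
Proof.
move=> a0 c0; apply: GLinj.
have ac0 : (a + c) 0 i0 = 0 by rewrite mxE a0 c0 addr0.
rewrite GL_MxE !FE // mulmxDr mulmx1 mulmxDl mul1mx -(mulmxA e0 a) (mulmxA a) ae0 //.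
by rewrite mul0mx mulmx0 addr0 mulmxDr addrA.
Qed.

Lemma F0 : F 0 = 1%g.
Proof. by apply: GLinj; rewrite FE ?mxE // mulmx0 addr0. Qed.

Lemma G_CH b : G \subset (Cgroup b * H)%g.
Proof.
apply/subsetP=> g Gg; have Ug : g \in U by apply: (subsetP hGU).
set a : 'rV[R]_n := \row_j (if ((0 < j)%N && (j < k.+1)%N) then GLval g i0 j else 0).
have a0 : a 0 i0 = 0 by rewrite mxE.
have na0 : (- a) 0 i0 = 0 by rewrite mxE a0 oppr0.
have -> : g = (g * F (- a) * F a)%g.
  by rewrite -mulgA FM // addNr F0 mulg1.
apply: mem_mulg; last by rewrite hH F_H.
rewrite inE groupM ?F_G // andTb; apply/forallP=> j; apply/implyP=> /andP[j0 jk].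
apply/forallP=> r; apply/eqP.
rewrite GL_MxE FE // mulmxDr mulmx1 mulmxA Ucol // !mxE big_ord1 !mxE eqxx /=.
by rewrite j0 jk /= mul1r addrN mul0r psi0.
Qed.

Lemma index_eq b : (#|H : H :&: Cgroup b| = #|G : Cgroup b|)%g.
Proof.
have GCH : (Cgroup b * H)%g = G :> {set gT}.
  by apply/eqP; rewrite eqEsubset mul_subG ?C_G // G_CH.
have E := mul_cardG (Cgroup b) H; rewrite GCH setIC in E.
have L1 := Lagrange (C_G b).
have L2 := Lagrange (subsetIl H (Cgroup b)).
apply/eqP; rewrite -(eqn_pmul2l (cardG_gt0 (Cgroup b))).
rewrite -(eqn_pmul2l (cardG_gt0 (H :&: Cgroup b)%G)) /=.
rewrite mulnCA L2 E -L1 mulnC mulnA.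
by [].
Qed.


Lemma cfclass_vals b (th : 'CF(B)) s : (th \in ('chi[B]_b ^: H)%CF) ->
  th 1%g = 1 /\ th (Zc s) = psi b s.
Proof.
case/cfclassP=> y Hy ->; split; first by rewrite cfConjg1 lin_char1 ?chi_lin.
have nBy : y \in 'N(B)%g by apply: (subsetP (normal_norm B_normal)).
have Uy : y \in U by apply: (subsetP H_U).
rewrite cfConjgE // conjgE invgK mulgA Zc_central // mulgK.
by [].
Qed.

Definition bsel (i : Iirr H) : Iirr B := sval (constt_cfRes_irr B i).

Lemma bselP i : bsel i \in irr_constt ('Res[B] 'chi[H]_i).
Proof. exact: svalP (constt_cfRes_irr B i). Qed.

Lemma cliff_sum i (x : gT) :
  'Res[B] 'chi[H]_i x =
  '['Res[B] 'chi[H]_i, 'chi_(bsel i)] * \sum_(th <- ('chi[B]_(bsel i) ^: H)%CF) th x.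
Proof.
have cl := Clifford_Res_sum_cfclass B_normal (bselP i).
by rewrite {1}cl cfunE sum_cfunE.
Qed.

Lemma chi_Zc i s : 'chi[H]_i (Zc s) = 'chi[H]_i 1%g * psi (bsel i) s.
Proof.
rewrite -(cfResE _ B_H (Zc_B s)) -(cfResE _ B_H (group1 B)) !cliff_sum.
have -> : \sum_(th <- ('chi[B]_(bsel i) ^: H)%CF) th (Zc s) =
  (\sum_(th <- ('chi[B]_(bsel i) ^: H)%CF) th 1%g) * psi (bsel i) s.
  rewrite mulr_suml; apply: eq_big_seq => th Hth.
  by have [-> ->] := cfclass_vals s Hth; rewrite mul1r.
by rewrite mulrA.
Qed.

Lemma deg_bound i : (#|G : Cgroup (bsel i)|%g)%:R <= 'chi[H]_i 1%g.
Proof.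
set b := bsel i.
have e1 : 'chi[H]_i 1%g = '['Res[B] 'chi[H]_i, 'chi_b] *
    (#|H : H :&: inertia 'chi[B]_b|%g)%:R.
  rewrite -(cfResE _ B_H (group1 B)) cliff_sum -size_cfclass; congr (_ * _).
  rewrite -sum1_size natr_sum; apply: eq_big_seq => th Hth.
  by have [-> _] := cfclass_vals 0 Hth.
rewrite e1; apply: le_trans (ler_peMl _ _); last first.
- have Ne := Cnat_cfdot_char_irr b (cfRes_char B (irr_char i)).
  have nz := bselP i; rewrite inE in nz.
  case/natrP: Ne nz => m ->; rewrite pnatr_eq0 ler1n lt0n; exact.
- exact: ler0n.
rewrite ler_nat -index_eq; apply: dvdn_leq; first exact: indexg_gt0.
apply: indexgS; apply/subsetP=> h /setIP[Hh Ih]; rewrite inE Hh /=.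
apply: inertiaC => //; exact: inertiaJ.
Qed.


Section Main.
Variables (d : nat) (rho : mx_representation algC H d).
Hypothesis frho : mx_faithful rho.

Local Notation chi := (cfRepr rho).

Definition theta : 'CF(G) :=
  \sum_(i in irr_constt chi) 'Ind[G] (lam (bsel i)).

Lemma theta_char : theta \is a character.
Proof. by apply: rpred_sum => i _; apply: cfInd_char; apply: lam_char. Qed.

Definition Dn := (\sum_(i in irr_constt chi) #|G : Cgroup (bsel i)|%g)%N.

Lemma theta1 : theta 1%g = Dn%:R.
Proof.
rewrite /theta sum_cfunE natr_sum; apply: eq_bigr => i _.
by rewrite cfInd1 ?C_G // lam1 mulr1.
Qed.

Lemma Dn_le : (Dn <= d)%N.
Proof.
rewrite -(ler_nat algC) -theta1 theta1 -(cfRepr1 rho).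
rewrite {1}[chi]cfun_sum_constt sum_cfunE natr_sum; apply: ler_sum => i Ci.
rewrite cfunE; apply: le_trans (deg_bound i) _; apply: ler_peMl.
  by apply: char1_ge0; apply: irr_char.
have Ne := Cnat_cfdot_char_irr i (cfRepr_char rho).
rewrite inE in Ci.
by case/natrP: Ne Ci => m ->; rewrite pnatr_eq0 ler1n lt0n.
Qed.

Lemma lam_neq0 b : lam b != 0.
Proof.
apply/eqP=> h; have := congr1 (fun f : 'CF(_) => f 1%g) h.
by rewrite lam1 cfunE => /eqP; rewrite oner_eq0.
Qed.

Lemma theta_Zc s : Zc s \in cfker theta -> s = 0.
Proof.
move=> Kx.
have Ki := cfker_sum_char (fun i _ => cfInd_char G (lam_char (bsel i))) Kx.
have psi1 : forall i, i \in irr_constt chi -> psi (bsel i) s = 1.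
  move=> i Ci; have := Ki i Ci.
  rewrite cfker_Ind ?C_G ?lam_char ?lam_neq0 // => /(subsetP (gcore_sub _ _)) Kl.
  have Cz : Zc s \in Cgroup (bsel i) := subsetP (cfker_sub (lam (bsel i))) _ Kl.
  by have := cfker1 Kl; rewrite lam_val // lam1 Zc_ent.
have Hz : Zc s \in H by apply: (subsetP B_H); apply: Zc_B.
have : Zc s \in cfker chi.
  rewrite cfkerEchar ?cfRepr_char // inE Hz /=; apply/eqP.
  rewrite {1 2}[chi]cfun_sum_constt !sum_cfunE; apply: eq_bigr => i Ci.
  by rewrite !cfunE chi_Zc psi1 // mulr1.
rewrite cfker_repr => /(subsetP frho); rewrite inE => /eqP h.
by rewrite -(Zc_ent s) h GL_1E mxE eq_sym (negbTE il_neq0).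
Qed.

Lemma theta_faithful : (cfker theta \subset [1 gT])%g.
Proof.
apply: (@Ktriv (cfker_group theta)); first exact: cfker_normal.
exact: theta_Zc.
Qed.

Definition theta' : 'CF(G) := theta + (1 : 'CF(G)) *+ (d - Dn).

Lemma theta'_char : theta' \is a character.
Proof. by rewrite rpredD ?theta_char // rpredMn // cfun1_char. Qed.

Lemma theta'1 : theta' 1%g = d%:R.
Proof.
by rewrite /theta' cfunE muln_cfunE cfun11 theta1 -natrD subnKC // Dn_le.
Qed.

Lemma theta'_faithful : (cfker theta' \subset [1 gT])%g.
Proof.
apply: subset_trans theta_faithful; apply/subsetP=> x Kx.
pose Phi (c : bool) : 'CF(G) := if c then theta else (1 : 'CF(G)) *+ (d - Dn).
have eT : theta' = \sum_(c : bool) Phi c by rewrite big_bool.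
rewrite eT in Kx.
have NP : forall c, predT c -> Phi c \is a character.
  by case=> _; rewrite /Phi ?theta_char // rpredMn // cfun1_char.
exact: (@cfker_sum_char _ G bool predT Phi x NP Kx true isT).
Qed.

Lemma main_ex : has_faithful_rep G d.
Proof.
case/char_reprP: theta'_char => [[m r]] /= Hr.
have md : m = d.
  apply/eqP; rewrite -(eqr_nat algC) -(cfRepr1 r) -Hr theta'1 //.
subst m; exists r; rewrite /mx_faithful -cfker_repr -Hr.
exact: theta'_faithful.
Qed.

End Main.

End Mat.

Lemma hf_le (gT : finGroupType) (G : {group gT}) n :
  has_faithful_rep G n -> (m_faithful G <= n)%N.
Proof.
rewrite /m_faithful; case: ex_minnP => m _ min h; apply: min.
by rewrite /has_faithful_repb; case: excluded_middle_informative.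
Qed.

Lemma hf_m (gT : finGroupType) (G : {group gT}) : has_faithful_rep G (m_faithful G).
Proof.
rewrite /m_faithful; case: ex_minnP => m Pm _; move: Pm.
by rewrite /has_faithful_repb; case: excluded_middle_informative.
Qed.

Lemma hf_res (gT : finGroupType) (G H : {group gT}) n :
  (H \subset G)%g -> has_faithful_rep G n -> has_faithful_rep H n.
Proof.
move=> sHG [r fr].
have rH : mx_repr H r.
  split; first exact: repr_mx1.
  by move=> x y Hx Hy; apply: repr_mxM; apply: (subsetP sHG).
exists (MxRepresentation rH); rewrite /mx_faithful; apply: subset_trans fr.
apply/subsetP=> x /rkerP[Hx rx]; apply/rkerP; split => //.
exact: (subsetP sHG).
Qed.


Theorem theorem1p2 (R : finComUnitRingType) (pi : R) (k : nat)
  (hR : chain_ring_unif pi) (h2 : (2%:R : R) \is a GRing.unit) (hk : (1 <= k)%N)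
  (H G : {group {'GL_k.+2[R]}}) (hH : H :=: Hei R k)
  (hHG : H \subset G) (hGU : G \subset Umat R k.+1) :
  m_faithful G = m_faithful H.
Proof.
apply/eqP; rewrite eqn_leq; apply/andP; split.
  have [rho frho] := hf_m H.
  exact: hf_le (main_ex hH hHG hGU frho).
exact: hf_le (hf_res hHG (hf_m G)).
Qed.
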